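(* Let $K$ be a fan-like sphere with vertex set $[m]$, and let $\Sigma$ be a complete fan over $\operatorname{wed}_1(K)$, whose vertex set is $\{0,1,\dots,m\}$ (where $0$ and $1$ denote the two new vertices created from the vertex $1$ of $K$). Choose a nonzero point $x_i$ on each 1-cone of $\Sigma$ corresponding to $i\in\{0,\dots,m\}$, and let $\widehat X=(\widehat x_0,\widehat x_1,\dots,\widehat x_m)$ be a Shephard diagram for $\Sigma$ with respect to $X=(x_0,\dots,x_m)$. Then $(\widehat x_1,\widehat x_2,\dots,\widehat x_m)$ and $(\widehat x_0,\widehat x_2,\dots,\widehat x_m)$ are Shephard diagrams for the projected fans $\operatorname{proj}_0\Sigma$ and $\operatorname{proj}_1\Sigma$ respectively (with respect to the images of the corresponding points $x_j$ in the quotient spaces). Furthermore \[S(\Sigma,\widehat X)=S(\operatorname{proj}_0\Sigma,(\widehat x_1,\dots,\widehat x_m))\cap S(\operatorname{proj}_1\Sigma,(\widehat x_0,\widehat x_2,\dots,\widehat x_m)).\]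
   Context: Simplicial wedge: $\operatorname{wed}_v(K)=(I\star\operatorname{link}_K\{v\})\cup(\partial I\star(K\setminus\{v\}))$, $I$ a 1-simplex on two new vertices, $\partial I$ its 0-skeleton, $\star$ the join, $K\setminus\{v\}$ the induced subcomplex on the other vertices. A fan-like sphere is a simplicial $(n-1)$-sphere underlying a complete simplicial fan in $\mathbb{R}^n$. Fans are simplicial; a fan over a complex $L$ has its 1-cones indexed by the vertices of $L$ and cones spanned by faces; it is complete if its cones cover $\mathbb{R}^n$. For a cone $\sigma$ of $\Sigma$, the projected fan $\operatorname{proj}_\sigma\Sigma$ is the fan in $\mathbb{R}^n/\operatorname{span}\sigma$ formed by the images of the cones of $\Sigma$ containing $\sigma$ (here $\operatorname{proj}_i$ means projection with respect to the 1-cone of vertex $i$). Linear transform: for a sequence $X=(x_1,\dots,x_m)$ spanning $\mathbb{R}^n$, write a basis of $\{\alpha\in\mathbb{R}^m:\sum\alpha_ix_i=0\}$ as the rows of an $(m-n)\times m$ matrix; its columns $\overline X=(\overline x_1,\dots,\overline x_m)$ form a linear transform of $X$. If $X$ positively spans $\mathbb{R}^n$, then $\operatorname{pos}\overline X$ is a strongly convex cone; choose a hyperplane $H$ not through $0$ meeting each ray $\{a\overline x_i:a>0\}$, at a point $\widehat x_i$; $\widehat X=(\widehat x_1,\dots,\widehat x_m)$ is a Shephard diagram of $X$. For a complete fan $\Sigma$ and points $x_i$ on its 1-cones, this is a Shephard diagram for $\Sigma$. A subsequence $Y$ of $X$ is a coface of $\Sigma$ if $\operatorname{pos}(X\setminus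 Y)$ is a cone of $\Sigma$; $\widehat X|_Y$ denotes the corresponding subsequence of $\widehat X$, and $S(\Sigma,\widehat X)=\bigcap_{Y\text{ coface of }\Sigma}\operatorname{relint}\operatorname{conv}\widehat X|_Y$. *)

(* Defs.v *)
From HB Require Import structures.
From mathcomp Require Import all_boot all_order all_algebra.
From mathcomp Require Import reals.
Set Implicit Arguments. Unset Strict Implicit. Unset Printing Implicit Defensive.
Import Order.TTheory GRing.Theory Num.Theory.
Local Open Scope ring_scope.

Section Defs.
Variable R : realType.

Section Complexes.
Variable V : finType.

Definition is_complex (K : {set {set V}}) : Prop :=
  set0 \in K /\ (forall F G : {set V}, F \in K -> G \subset F -> G \in K).

Definition vertices (K : {set {set V}}) : {set V} := [set v | [set v] \in K].

Definition link (K : {set {set V}}) (v : V) : {set {set V}} :=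
  [set F in K | (v \notin F) && ((v |: F) \in K)].

Definition deletion (K : {set {set V}}) (v : V) : {set {set V}} :=
  [set F in K | v \notin F].

Definition cjoin (A B : {set {set V}}) : {set {set V}} :=
  [set F :|: G | F in A, G in B].
End Complexes.

(* wed_1(K) for K on the vertices {1,...,m} of 'I_m.+1: the vertex 1 of K is
   replaced by the two new vertices 0 and 1 (I = {0,1}). *)
Definition v1 (m : nat) : 'I_m.+1 := inord 1.

Definition wed1 (m : nat) (K : {set {set 'I_m.+1}}) : {set {set 'I_m.+1}} :=
  cjoin (powerset [set ord0; v1 m]) (link K (v1 m))
  :|: cjoin [set set0; [set ord0]; [set v1 m]] (deletion K (v1 m)).

Section Fans.
Variables (V : finType) (n : nat).

Definition pos (x : V -> 'rV[R]_n) (F : {set V}) (y : 'rV[R]_n) : Prop :=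
  exists c : V -> R, (forall i, 0 <= c i) /\ y = \sum_(i in F) c i *: x i.

Definition lin_indep (x : V -> 'rV[R]_n) (F : {set V}) : Prop :=
  forall c : V -> R, \sum_(i in F) c i *: x i = 0 -> forall i, i \in F -> c i = 0.

Definition complete_fan (L : {set {set V}}) (x : V -> 'rV[R]_n) : Prop :=
  [/\ is_complex L,
      (forall F, F \in L -> lin_indep x F),
      (forall F G, F \in L -> G \in L ->
         forall y, (pos x F y /\ pos x G y) <-> pos x (F :&: G) y)
    & (forall y, exists2 F, F \in L & pos x F y)].

(* a fan, as the collection of its cones (cones are subsets of R^n) *)
Definition fan_of (L : {set {set V}}) (x : V -> 'rV[R]_n)
  (C : 'rV[R]_n -> Prop) : Prop :=
  exists2 F, F \in L & forall y, C y <-> pos x F y.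
End Fans.

Definition fan_like (V : finType) (K : {set {set V}}) : Prop :=
  exists (n : nat) (x : V -> 'rV[R]_n), complete_fan K x.

(* P : R^n -> R^M (y |-> y *m P) realizes the quotient R^n / span v *)
Definition quotient_map (n M : nat) (v : 'rV[R]_n) (P : 'M[R]_(n, M)) : Prop :=
  (forall y : 'rV[R]_n, y *m P = 0 <-> exists c : R, y = c *: v) /\
  (forall z : 'rV[R]_M, exists y : 'rV[R]_n, z = y *m P).

(* projected fan proj_v Sigma in R^n/span v (realized as R^M via P):
   images of the cones of Sigma containing the 1-cone pos{v} *)
Definition proj_fan (n M : nat) (Sig : ('rV[R]_n -> Prop) -> Prop)
  (v : 'rV[R]_n) (P : 'M[R]_(n, M)) (C' : 'rV[R]_M -> Prop) : Prop :=
  exists C, [/\ Sig C, (forall a : R, 0 <= a -> C (a *: v))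
               & forall z, C' z <-> exists y, C y /\ z = y *m P].

Section Shephard.
Variables (k n d : nat).

(* the rows of A form a basis of the space of linear dependences of X *)
Definition lin_transform (X : 'I_k -> 'rV[R]_n) (A : 'M[R]_(d, k)) : Prop :=
  [/\ (forall y : 'rV[R]_n, exists c : 'I_k -> R, y = \sum_i c i *: X i),
      (forall b : 'rV[R]_d, b *m A = 0 -> b = 0)
    & (forall a : 'rV[R]_k,
         \sum_i a 0 i *: X i = 0 <-> exists b : 'rV[R]_d, a = b *m A)].

Definition pos_spans (X : 'I_k -> 'rV[R]_n) : Prop :=
  forall y : 'rV[R]_n, exists c : 'I_k -> R,
    (forall i, 0 <= c i) /\ y = \sum_i c i *: X i.

Definition dotr (y l : 'rV[R]_d) : R := (y *m l^T) 0 0.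

(* Xhat is a Shephard diagram of X: Xhat_i is the intersection of the ray
   through the i-th column of a linear transform of X with an affine
   hyperplane H = {y | <y,l> = 1} not through 0 *)
Definition shephard (X : 'I_k -> 'rV[R]_n) (Xhat : 'I_k -> 'rV[R]_d) : Prop :=
  pos_spans X /\
  exists A : 'M[R]_(d, k), lin_transform X A /\
  exists l : 'rV[R]_d, l != 0 /\
    forall i, (exists a : R, 0 < a /\ Xhat i = a *: (col i A)^T) /\
              dotr (Xhat i) l = 1.

Definition conv (Xh : 'I_k -> 'rV[R]_d) (Y : {set 'I_k}) (p : 'rV[R]_d) : Prop :=
  exists lam : 'I_k -> R, [/\ (forall i, i \in Y -> 0 <= lam i),
    \sum_(i in Y) lam i = 1 & p = \sum_(i in Y) lam i *: Xh i].

Definition coface (Sig : ('rV[R]_n -> Prop) -> Prop) (X : 'I_k -> 'rV[R]_n)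
  (Y : {set 'I_k}) : Prop :=
  exists C, Sig C /\ forall y, C y <-> pos X (~: Y) y.
End Shephard.

Definition aff_hull (d : nat) (C : 'rV[R]_d -> Prop) (q : 'rV[R]_d) : Prop :=
  exists (l : nat) (s : 'I_l -> 'rV[R]_d) (mu : 'I_l -> R),
    [/\ forall i, C (s i), \sum_i mu i = 1 & q = \sum_i mu i *: s i].

Definition relint (d : nat) (C : 'rV[R]_d -> Prop) (p : 'rV[R]_d) : Prop :=
  C p /\ exists e : R, 0 < e /\
    forall q, aff_hull C q -> (forall j, `|q 0 j - p 0 j| < e) -> C q.

Definition S_set (k n d : nat) (Sig : ('rV[R]_n -> Prop) -> Prop)
  (X : 'I_k -> 'rV[R]_n) (Xhat : 'I_k -> 'rV[R]_d) (p : 'rV[R]_d) : Prop :=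
  forall Y : {set 'I_k}, coface Sig X Y -> relint (conv Xhat Y) p.
End Defs.

(* Main.v *)
Require Import Defs.
From HB Require Import structures.
From mathcomp Require Import all_boot all_order all_algebra.
From mathcomp Require Import reals.
Set Implicit Arguments. Unset Strict Implicit. Unset Printing Implicit Defensive.
Import Order.TTheory GRing.Theory Num.Theory.
Local Open Scope ring_scope.

Section PosLemmas.
Variables (R : realType) (V : finType) (n : nat) (x : V -> 'rV[R]_n).

Lemma pos0 y : pos x set0 y -> y = 0.
Proof. by case=> c [_ ->]; rewrite big_set0. Qed.

Lemma sum_restr (F H : {set V}) (c : V -> R) : H \subset F ->
  \sum_(i in F) (if i \in H then c i else 0) *: x i = \sum_(i in H) c i *: x i.
Proof.
move=> sHF.
rewrite (bigID (mem H)) /= [X in _ + X]big1 ?addr0; last first.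
  by move=> i /andP[_ /negbTE ->]; rewrite scale0r.
apply: eq_big => [i|i /andP[_ ->]] //.
by case iH: (i \in H); rewrite ?andbT ?andbF // (subsetP sHF).
Qed.

Lemma pos_sub (F G : {set V}) y : F \subset G -> pos x F y -> pos x G y.
Proof.
move=> sFG [c [c0 ->]].
exists (fun i => if i \in F then c i else 0); split.
  by move=> i; case: ifP.
by rewrite sum_restr.
Qed.

Lemma pos1 (v : V) (a : R) : 0 <= a -> pos x [set v] (a *: x v).
Proof. by move=> a0; exists (fun _ => a); split => //; rewrite big_set1. Qed.

Lemma pos1E (v : V) y : pos x [set v] y -> exists a : R, y = a *: x v.
Proof. by case=> c [_ ->]; rewrite big_set1; exists (c v). Qed.

Lemma pos_vec (F : {set V}) i : i \in F -> pos x F (x i).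
Proof.
move=> iF; apply: (@pos_sub [set i]); first by rewrite sub1set.
by rewrite -[x i]scale1r; apply: pos1.
Qed.

Lemma pos_add (F : {set V}) y z : pos x F y -> pos x F z -> pos x F (y + z).
Proof.
case=> c [c0 ->] [e [e0 ->]]; exists (fun i => c i + e i); split.
  by move=> i; rewrite addr_ge0.
by rewrite -big_split /=; apply: eq_bigr => i _; rewrite scalerDl.
Qed.

Lemma pos_scale_v (F : {set V}) (v : V) a : v \in F -> 0 <= a -> pos x F (a *: x v).
Proof. by move=> vF a0; apply: (@pos_sub [set v]); [rewrite sub1set | apply: pos1]. Qed.

End PosLemmas.


Section FanLemmas.
Variables (R : realType) (V : finType) (n : nat) (x : V -> 'rV[R]_n).
Variable L : {set {set V}}.
Hypothesis hL : complete_fan L x.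
Hypothesis h1 : forall i, [set i] \in L.

Lemma fan_closed (F G : {set V}) : F \in L -> G \subset F -> G \in L.
Proof. by case: hL => [[_ hcl] _ _ _]; apply: hcl. Qed.

Lemma fan_indep (F : {set V}) : F \in L -> lin_indep x F.
Proof. by case: hL => _ hli _ _; apply: hli. Qed.

Lemma fan_cap (F G : {set V}) y : F \in L -> G \in L -> pos x F y -> pos x G y ->
  pos x (F :&: G) y.
Proof. by case: hL => _ _ hcap _ FL GL py qy; apply/(hcap F G FL GL). Qed.

Lemma xnz i : x i != 0.
Proof.
apply/eqP => xi0.
have := fan_indep (h1 i) (c := fun _ => 1).
rewrite big_set1 scale1r xi0 => /(_ erefl i).
by rewrite in_set1 eqxx => /(_ erefl)/eqP; rewrite oner_eq0.
Qed.

Lemma sum_delta (F : {set V}) f : f \in F ->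
  \sum_(j in F) (j == f)%:R *: x j = x f.
Proof.
move=> fF; rewrite (bigD1 f) //= eqxx scale1r big1 ?addr0 //.
by move=> j /andP[_ /negbTE ->]; rewrite scale0r.
Qed.

Lemma mem_of_pos (F : {set V}) u : F \in L -> pos x F (x u) -> u \in F.
Proof.
move=> FL p1; apply/negPn/negP => uF.
have p2 : pos x [set u] (x u) by apply: pos_vec; rewrite in_set1.
have := fan_cap FL (h1 u) p1 p2.
have -> : F :&: [set u] = set0.
  apply/setP => j; rewrite !inE; apply/negbTE; apply/andP => -[jF /eqP ejh].
  by rewrite -ejh jF in uF.
by move/pos0 => /eqP; rewrite (negbTE (xnz u)).
Qed.

Lemma face_eq (F H : {set V}) : F \in L -> (forall y, pos x F y <-> pos x H y) -> F = H.
Proof.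
move=> FL eFH.
have sHF : H \subset F.
  apply/subsetP => h hH; apply/negPn/negP => hF.
  have p1 : pos x F (x h) by apply/eFH; apply: pos_vec.
  have p2 : pos x [set h] (x h) by apply: pos_vec; rewrite in_set1.
  have := fan_cap FL (h1 h) p1 p2.
  have -> : F :&: [set h] = set0.
    apply/setP => j; rewrite !inE; apply/negbTE; apply/andP => -[jF /eqP ejh].
    by rewrite -ejh jF in hF.
  by move/pos0 => /eqP; rewrite (negbTE (xnz h)).
apply/setP => f; apply/idP/idP => [fF|/(subsetP sHF)//].
have : pos x H (x f) by apply/eFH; apply: pos_vec.
case=> c [_ exf].
pose d j := (if j \in H then c j else 0) - (j == f)%:R.
have : \sum_(j in F) d j *: x j = 0.
  rewrite /d; under eq_bigr do rewrite scalerBl.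
  by rewrite sumrB sum_restr // sum_delta // -exf subrr.
move/(fan_indep FL)/(_ f fF); rewrite /d eqxx.
by case: ifP => // _; rewrite sub0r => /eqP; rewrite oppr_eq0 oner_eq0.
Qed.

End FanLemmas.

Lemma coface_iff (R : realType) (k n : nat) (x : 'I_k -> 'rV[R]_n)
  (L : {set {set 'I_k}}) (hL : complete_fan L x) (h1 : forall i, [set i] \in L)
  (Y : {set 'I_k}) : coface (fan_of L x) x Y <-> ~: Y \in L.
Proof.
split.
  case=> C [[F FL eC] eY].
  suff <- : F = ~: Y by [].
  by apply: (face_eq hL h1) => // y; rewrite -eC eY.
move=> YL; exists (pos x (~: Y)); split => //.
by exists (~: Y).
Qed.



Section ProjLemmas.
Variables (R : realType) (n N M : nat) (x : 'I_n.+1 -> 'rV[R]_N).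
Variable L : {set {set 'I_n.+1}}.
Hypothesis hL : complete_fan L x.
Hypothesis h1 : forall i, [set i] \in L.
Variables (v : 'I_n.+1) (P : 'M[R]_(N, M)).
Hypothesis hP : quotient_map (x v) P.
Hypothesis hv : forall h, [set v; h] \in L.

Let X' := fun j : 'I_n => x (lift v j) *m P.

Lemma xvP : x v *m P = 0.
Proof. by apply/hP.1; exists 1; rewrite scale1r. Qed.

Lemma sum_lift (T : nmodType) (f : 'I_n.+1 -> T) (F : {set 'I_n.+1}) :
  v \in F -> \sum_(i in F) f i = f v + \sum_(j in [set j | lift v j \in F]) f (lift v j).
Proof.
move=> vF; rewrite (bigD1_ord v) //=.
by congr (_ + _); apply: eq_bigl => j; rewrite inE.
Qed.

Definition ext (c : 'I_n -> R) (d : R) (i : 'I_n.+1) : R :=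
  if unlift v i is Some j then c j else d.

Lemma ext_lift c d j : ext c d (lift v j) = c j.
Proof. by rewrite /ext liftK. Qed.

Lemma ext_v c d : ext c d v = d.
Proof. by rewrite /ext unlift_none. Qed.

Lemma pos_proj (F : {set 'I_n.+1}) : v \in F -> forall z,
  (exists y, pos x F y /\ z = y *m P) <-> pos X' [set j | lift v j \in F] z.
Proof.
move=> vF z; split.
  case=> y [[c [c0 ->]] ->].
  exists (fun j => c (lift v j)); split => [j|]; first exact: c0.
  rewrite mulmx_suml (sum_lift _ vF) -scalemxAl xvP scaler0 add0r.
  by apply: eq_bigr => j _; rewrite -scalemxAl.
case=> c [c0 ->].
exists (\sum_(i in F) ext c 0 i *: x i); split.
  exists (ext c 0); split => // i; rewrite /ext; case: (unlift v i) => //.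
rewrite mulmx_suml (sum_lift _ vF) ext_v scale0r mul0mx add0r.
by apply: eq_bigr => j _; rewrite ext_lift -scalemxAl.
Qed.

Lemma ray_in (F : {set 'I_n.+1}) y u : F \in L -> v \in F -> u != v ->
  pos x F y -> (x u - y) *m P = 0 -> u \in F.
Proof.
move=> FL vF uv py /hP.1 [t et].
apply/negPn/negP => uF.
case: (lerP 0 t) => t0.
  have p1 : pos x F (x u).
    have -> : x u = y + t *: x v by rewrite -et addrC subrK.
    by apply: pos_add => //; apply: pos_scale_v.
  have p2 : pos x [set u] (x u) by apply: pos_vec; rewrite in_set1.
  have := fan_cap hL FL (h1 u) p1 p2.
  have -> : F :&: [set u] = set0.
    apply/setP => j; rewrite !inE; apply/negbTE; apply/andP => -[jF /eqP ejh].
    by rewrite -ejh jF in uF.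
  by move/pos0 => /eqP; rewrite (negbTE (xnz hL h1 u)).
set w := x u + (- t) *: x v.
have ew : w = y by rewrite /w scaleNr -et opprB addrC subrK.
have p1 : pos x F w by rewrite ew.
have p2 : pos x [set v; u] w.
  apply: pos_add; first by apply: pos_vec; rewrite !inE eqxx orbT.
  by apply: pos_scale_v; rewrite ?inE ?eqxx // oppr_ge0 ltW.
have := fan_cap hL FL (hv u) p1 p2.
move/(@pos_sub _ _ _ _ _ [set v]) => /(_ _) /pos1E [].
  apply/subsetP => j; rewrite !inE => /andP[jF /orP[//|/eqP eju]].
  by rewrite -eju jF in uF.
move=> a ea.
have uv' : v \notin [set u] by rewrite in_set1 eq_sym.
have := fan_indep hL (hv u) (c := fun i => if i == u then 1 else - (a + t)).
rewrite big_setU1 //= big_set1 eqxx (negbTE (_ : v != u)) ?scale1r; last by rewrite eq_sym.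
move=> H; suff /H /(_ u) : - (a + t) *: x v + x u = 0.
  by rewrite !inE eqxx orbT => /(_ isT)/eqP; rewrite oner_eq0.
have -> : x u = (a + t) *: x v.
  by rewrite scalerDl -ea /w scaleNr addrNK.
by rewrite scaleNr addNr.
Qed.

Lemma lv_in (Y : {set 'I_n}) j : (lift v j \in lift v @: Y) = (j \in Y).
Proof. by rewrite mem_imset //; apply: lift_inj. Qed.

Lemma v_notin (Y : {set 'I_n}) : v \notin lift v @: Y.
Proof. by apply/imsetP => -[j _ ej]; move: (neq_lift v j); rewrite -ej eqxx. Qed.

Lemma pre_im (H : {set 'I_n}) : [set j | lift v j \in v |: lift v @: H] = H.
Proof.
by apply/setP => j; rewrite !inE lv_in eq_sym (negbTE (neq_lift v j)).
Qed.

Lemma pre_compl (Y : {set 'I_n}) : [set j | lift v j \in ~: (lift v @: Y)] = ~: Y.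
Proof. by apply/setP => j; rewrite !inE lv_in. Qed.

Lemma proj_coface_iff (Y' : {set 'I_n}) :
  coface (proj_fan (fan_of L x) (x v) P) X' Y' <-> ~: (lift v @: Y') \in L.
Proof.
split; last first.
  move=> FL; set F := ~: _ in FL.
  have vF : v \in F by rewrite inE v_notin.
  exists (pos X' (~: Y')); split => //.
  exists (pos x F); split.
  - by exists F.
  - by move=> a a0; apply: pos_scale_v.
  by move=> z; rewrite (pos_proj vF) pre_compl.
case=> C' [[C [[F FL eC] Cv eC']] eY].
have vF : v \in F.
  by apply: (mem_of_pos hL h1 FL); apply/eC; rewrite -[x v]scale1r; apply: Cv.
have eGH : forall z, pos X' [set j | lift v j \in F] z <-> pos X' (~: Y') z.
  move=> z; rewrite -(pos_proj vF) -eY eC'.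
  by split; case=> y [py ->]; exists y; split => //; apply/eC.
set G := [set j | lift v j \in F] in eGH *.
set H := ~: Y' in eGH *.
have sHG : H \subset G.
  apply/subsetP => h hH.
  have /eGH/(pos_proj vF) [y [py ey]] : pos X' H (X' h) by apply: pos_vec.
  rewrite inE; apply: (ray_in FL vF _ py); first by rewrite eq_sym neq_lift.
  by rewrite mulmxBl -ey subrr.
have eGH' : G = H.
  apply/eqP; rewrite eqEsubset sHG andbT; apply/subsetP => g gG.
  set F' := v |: lift v @: H.
  have sF'F : F' \subset F.
    apply/subsetP => i; rewrite !inE => /orP[/eqP ->//|/imsetP[h hH ->]].
    by have := subsetP sHG h hH; rewrite inE.
  have F'L : F' \in L by apply: (fan_closed hL FL).
  have vF' : v \in F' by rewrite !inE eqxx.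
  have : pos X' H (X' g) by apply/eGH; apply: pos_vec.
  rewrite -{1}(pre_im H) -/F' => /(pos_proj vF') [y [py ey]].
  have : lift v g \in F'.
    apply: (ray_in F'L vF' _ py); first by rewrite eq_sym neq_lift.
    by rewrite mulmxBl -ey subrr.
  by rewrite !inE eq_sym (negbTE (neq_lift v g)) lv_in /H inE.
suff -> : ~: (lift v @: Y') = F by [].
apply/setP => i; case: (unliftP v i) => [j|] ->.
  rewrite inE lv_in.
  by have := congr1 (fun S : {set 'I_n} => j \in S) eGH'; rewrite /= !inE => ->.
by rewrite inE v_notin vF.
Qed.

End ProjLemmas.


Section ShephardProj.
Variables (R : realType) (n N M d : nat) (x : 'I_n.+1 -> 'rV[R]_N).
Variables (Xhat : 'I_n.+1 -> 'rV[R]_d) (v : 'I_n.+1) (P : 'M[R]_(N, M)).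
Hypothesis hP : quotient_map (x v) P.
Hypothesis xv0 : x v != 0.

Lemma xvP' : x v *m P = 0.
Proof. by apply/hP.1; exists 1; rewrite scale1r. Qed.

Lemma sum_all_lift (T : nmodType) (f : 'I_n.+1 -> T) :
  \sum_i f i = f v + \sum_j f (lift v j).
Proof. by rewrite (bigD1_ord v). Qed.

Lemma span_proj (c : 'I_n.+1 -> R) y :
  y = \sum_i c i *: x i ->
  y *m P = \sum_j c (lift v j) *: (x (lift v j) *m P).
Proof.
move=> ->; rewrite mulmx_suml sum_all_lift -scalemxAl xvP' scaler0 add0r.
by apply: eq_bigr => j _; rewrite -scalemxAl.
Qed.

Lemma shephard_proj : shephard x Xhat ->
  shephard (fun j => x (lift v j) *m P) (fun j => Xhat (lift v j)).
Proof.
case=> hps [A [[hsp hinj hdep] [l [l0 hX]]]].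
split.
  move=> z; have [y ->] := hP.2 z; have [c [c0 ey]] := hps y.
  by exists (fun j => c (lift v j)); split => // ; apply: span_proj.
pose A0 : 'M[R]_(d, n) := \matrix_(i, j) A i (lift v j).
have eA0 : forall b : 'rV_d, forall j, (b *m A0) 0 j = (b *m A) 0 (lift v j).
  by move=> b j; rewrite !mxE; apply: eq_bigr => i _; rewrite mxE.
exists A0; split; first split.
- move=> z; have [y ->] := hP.2 z; have [c ey] := hsp y.
  by exists (fun j => c (lift v j)); apply: span_proj.
- move=> b bA0; apply: hinj; set a := b *m A.
  have al : forall j, a 0 (lift v j) = 0.
    by move=> j; rewrite -eA0 bA0 mxE.
  have : \sum_i a 0 i *: x i = 0 by apply/hdep; exists b.
  rewrite sum_all_lift big1 ?addr0; last by move=> j _; rewrite al scale0r.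
  move/eqP; rewrite scaler_eq0 (negbTE xv0) orbF => /eqP av.
  apply/rowP => i; rewrite [RHS]mxE; case: (unliftP v i) => [j|] ->; by rewrite ?al ?av.
- move=> a'; split.
    move=> s0.
    have : (\sum_j a' 0 j *: x (lift v j)) *m P = 0.
      by rewrite mulmx_suml -[RHS]s0; apply: eq_bigr => j _; rewrite -scalemxAl.
    move/hP.1 => [t et].
    pose a : 'rV[R]_n.+1 := \row_i (if unlift v i is Some j then a' 0 j else - t).
    have : \sum_i a 0 i *: x i = 0.
      rewrite sum_all_lift !mxE unlift_none.
      under eq_bigr do rewrite mxE liftK.
      by rewrite et scaleNr addNr.
    move/hdep => [b eb]; exists b; apply/rowP => j.
    by rewrite eA0 -eb mxE liftK.
  move=> [b ->].
  have : (\sum_i (b *m A) 0 i *: x i) *m P = 0 by rewrite (proj2 (hdep _)) ?mul0mx //; exists b.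
  rewrite (span_proj erefl) => H0; rewrite -[RHS]H0.
  by apply: eq_bigr => j _; rewrite eA0.
exists l; split => // j; have [[a [a0 ea]] dl] := hX (lift v j).
split => //; exists a; split => //; rewrite ea; congr (_ *: _^T).
by apply/matrixP => i k; rewrite !mxE.
Qed.

End ShephardProj.


Lemma relint_ext (R : realType) d (C D : 'rV[R]_d -> Prop) p :
  (forall q, C q <-> D q) -> relint C p -> relint D p.
Proof.
move=> eCD [Cp [e [e0 he]]]; split; first exact/eCD.
exists e; split => // q [l [s [mu [Cs smu eq]]]] qe.
apply/eCD; apply: he => //; exists l, s, mu; split => // i; exact/eCD.
Qed.

Lemma conv_lift (R : realType) n d (Xh : 'I_n.+1 -> 'rV[R]_d) (v : 'I_n.+1)
  (Y : {set 'I_n}) q :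
  conv Xh (lift v @: Y) q <-> conv (fun j => Xh (lift v j)) Y q.
Proof.
have inj : {in Y &, injective (lift v)} by move=> i j _ _; apply: lift_inj.
split.
  case=> lam [l0 s1 ->]; exists (fun j => lam (lift v j)); split.
  - by move=> j jY; apply: l0; rewrite mem_imset //; apply: lift_inj.
  - by rewrite -(big_imset _ inj).
  by rewrite (big_imset _ inj).
case=> lam [l0 s1 ->].
exists (fun i => if unlift v i is Some j then lam j else 0); split.
- move=> i /imsetP [j jY ->]; rewrite liftK; exact: l0.
- by rewrite (big_imset _ inj); under eq_bigr do rewrite liftK.
by rewrite (big_imset _ inj); under eq_bigr do rewrite liftK.
Qed.

Lemma conv_sub (R : realType) k d (Xh : 'I_k -> 'rV[R]_d) (Y0 Y : {set 'I_k}) q :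
  Y0 \subset Y -> conv Xh Y0 q -> conv Xh Y q.
Proof.
move=> sY [lam [l0 s1 ->]].
exists (fun i => if i \in Y0 then lam i else 0); split.
- by move=> i _; case: ifP => // /l0.
- rewrite -big_mkcondr /= -s1; apply: eq_bigl => i.
  by case iY0: (i \in Y0); rewrite ?andbT ?andbF // (subsetP sY).
rewrite [RHS](bigID (mem Y0)) /= [X in _ + X]big1 ?addr0; last first.
  by move=> i /andP[_ /negbTE ->]; rewrite scale0r.
symmetry; apply: eq_big => [i|i /andP[_ ->]] //.
by case iY0: (i \in Y0); rewrite ?andbT ?andbF // (subsetP sY).
Qed.

Lemma conv_pt (R : realType) k d (Xh : 'I_k -> 'rV[R]_d) (Y : {set 'I_k}) i :
  i \in Y -> conv Xh Y (Xh i).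
Proof.
move=> iY; exists (fun j => (j == i)%:R); split.
- by move=> j _; rewrite ler0n.
- by rewrite (bigD1 i) //= eqxx big1 ?addr0 // => j /andP[_ /negbTE ->].
rewrite (bigD1 i) //= eqxx scale1r big1 ?addr0 //.
by move=> j /andP[_ /negbTE ->]; rewrite scale0r.
Qed.

Lemma relint_extend (R : realType) k N d (x : 'I_k -> 'rV[R]_N)
  (Xhat : 'I_k -> 'rV[R]_d) (Y0 Y : {set 'I_k}) p :
  shephard x Xhat -> lin_indep x (~: Y0) -> Y0 \subset Y ->
  relint (conv Xhat Y0) p -> relint (conv Xhat Y) p.
Proof.
move=> [_ [A [[_ hinj hdep] [l [l0 hX]]]]] hli sY [Cp [e [e0 he]]].
have dotr_lin : forall (I : finType) (P : pred I) (mu : I -> R) (y : I -> 'rV_d),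
    dotr (\sum_(i | P i) mu i *: y i) l = \sum_(i | P i) mu i * dotr (y i) l.
  move=> I P mu y; rewrite /dotr mulmx_suml summxE; apply: eq_bigr => i _.
  by rewrite -scalemxAl mxE.
have dX : forall i, dotr (Xhat i) l = 1 := fun i => (hX i).2.
have conv_dot : forall q, conv Xhat Y q -> dotr q l = 1.
  move=> q [lam [_ s1 ->]]; rewrite dotr_lin -[RHS]s1.
  by apply: eq_bigr => i _; rewrite dX mulr1.
have aff_dot : forall q, aff_hull (conv Xhat Y) q -> dotr q l = 1.
  move=> q [m [s [mu [Cs s1 ->]]]]; rewrite (dotr_lin _ xpredT) -[RHS]s1.
  by apply: eq_bigr => i _; rewrite conv_dot ?mulr1.
have [Mx MxE] : exists Mx : 'M[R]_(d, k),
    forall i j, Mx i j = A i j * (j \in Y0)%:R.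
  by exists (\matrix_(i, j) (A i j * (j \in Y0)%:R)) => i j; rewrite mxE.
have bMx : forall (b : 'rV_d) j, (b *m Mx) 0 j = (b *m A) 0 j * (j \in Y0)%:R.
  move=> b j; rewrite !mxE mulr_suml; apply: eq_bigr => i _.
  by rewrite MxE mulrA.
have inj : forall b : 'rV_d, b *m Mx = 0 -> b = 0.
  move=> b bM; apply: hinj.
  have aY : forall i, i \in Y0 -> (b *m A) 0 i = 0.
    move=> i iY; have := congr1 (fun M : 'rV_k => M 0 i) bM.
    by rewrite /= bMx iY mulr1 => ->; rewrite mxE.
  have : \sum_i (b *m A) 0 i *: x i = 0 by apply/hdep; exists b.
  move=> hd; have hs : \sum_(i in ~: Y0) (b *m A) 0 i *: x i = 0.
    rewrite -[RHS]hd [RHS](bigID (mem Y0)) /= [X in _ = X + _]big1 ?add0r.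
      by apply: eq_bigl => j; rewrite inE.
    by move=> i iY; rewrite aY ?scale0r.
  apply/rowP => i; rewrite [RHS]mxE; case iY: (i \in Y0); first exact: aY.
  by apply: (hli (fun i => (b *m A) 0 i)) hs _ _; rewrite inE iY.
have rk : \rank Mx = d.
  have K0 : kermx Mx = 0.
    apply/matrixP => i j; rewrite [RHS]mxE.
    have : row i (kermx Mx) *m Mx = 0 by rewrite -row_mul mulmx_ker row0.
    by move/inj => /(congr1 (fun M : 'rV_d => M 0 j)); rewrite !mxE.
  have := mxrank_ker Mx; rewrite K0 mxrank0 => /esym/eqP; rewrite subn_eq0 => h.
  by apply/eqP; rewrite eqn_leq h rank_leq_row.
have rf : row_full Mx^T by rewrite /row_full mxrank_tr rk.
have hXa : forall i, exists2 al : R, al != 0 & Xhat i = al *: (col i A)^T.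
  by move=> i; have [[a [a0 ea]] _] := hX i; exists a => //; rewrite gt_eqF.
have span : forall q, dotr q l = 1 -> aff_hull (conv Xhat Y0) q.
  move=> q dq.
  have [beta eq] : exists beta : 'rV_k, q = beta *m Mx^T.
    by case/row_fullP: rf => B hB; exists (q *m B); rewrite -mulmxA hB mulmx1.
  have [al hal] : exists al : 'I_k -> R, forall i, al i != 0 /\ Xhat i = al i *: (col i A)^T.
    exists (fun i => (dotr (col i A)^T l)^-1) => i.
    have [a a0 ea] := hXa i.
    have h : a * dotr (col i A)^T l = 1.
      by rewrite -(dX i) ea /dotr -scalemxAl; symmetry; exact: mxE.
    have ec : dotr (col i A)^T l = a^-1 by rewrite -(mulKf a0 (dotr (col i A)^T l)) h mulr1.
    by rewrite ec invrK.
  pose co i := beta 0 i / al i.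
  have eqq : q = \sum_(i in Y0) co i *: Xhat i.
    apply/rowP => j; rewrite {1}eq mxE summxE [RHS]big_mkcond /=.
    apply: eq_bigr => i _; rewrite [Mx^T i j]mxE MxE.
    case iY: (i \in Y0); last by rewrite /= mulr0n !mulr0.
    rewrite /= mulr1n mulr1 (hal i).2 !mxE /co mulrA divfK //; exact: (hal i).1.
  have s1 : \sum_(i in Y0) co i = 1.
    rewrite -dq eqq dotr_lin; apply: eq_bigr => i _; by rewrite dX mulr1.
  exists k, (fun i => if i \in Y0 then Xhat i else p),
    (fun i => if i \in Y0 then co i else 0); split.
  - by move=> i; case: ifP => // iY; apply: conv_pt.
  - by rewrite -big_mkcond.
  rewrite {1}eqq big_mkcond; apply: eq_bigr => i _.
  by case: ifP => _ //; rewrite scale0r.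
split; first exact: conv_sub sY Cp.
exists e; split => // q aq qe.
apply: (conv_sub sY); apply: he qe.
by apply: span; apply: aff_dot.
Qed.


Section Wedge.
Variables (R : realType) (m : nat) (K : {set {set 'I_m.+1}}).
Hypothesis hm : (0 < m)%N.
Hypothesis hK : fan_like R K.
Hypothesis hV : vertices K = [set i : 'I_m.+1 | i != ord0].
Hypothesis hW : is_complex (wed1 K).

Lemma v1_neq0 : v1 m != ord0.
Proof. by rewrite -val_eqE /= /v1 inordK. Qed.

Lemma K0 : set0 \in K.
Proof. by case: hK => n0 [x0 [[]]]. Qed.

Lemma K1 i : i != ord0 -> [set i] \in K.
Proof.
move=> i0; have : i \in vertices K by rewrite hV inE.
by rewrite /vertices inE.
Qed.

Lemma wed01 : [set ord0; v1 m] \in wed1 K.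
Proof.
rewrite /wed1 inE; apply/orP; left.
have := imset2_f (fun F G : {set 'I_m.+1} => F :|: G)
  (D := mem (powerset [set ord0; v1 m])) (D2 := fun _ => mem (link K (v1 m)))
  (x := [set ord0; v1 m]) (x2 := set0).
rewrite setU0; apply.
  by rewrite powersetE.
by rewrite inE K0 inE setU0 K1 // v1_neq0.
Qed.

Lemma wed_pair (a h : 'I_m.+1) : a \in [set ord0; v1 m] -> [set a; h] \in wed1 K.
Proof.
move=> aI.
case: hW => _ hcl.
  case hI: (h \in [set ord0; v1 m]).
    apply: (hcl _ _ wed01); apply/subsetP => i; rewrite !inE => /orP[]/eqP ->.
      by move: aI; rewrite !inE.
    by move: hI; rewrite !inE.
  rewrite /wed1 inE; apply/orP; right.
  have := imset2_f (fun F G : {set 'I_m.+1} => F :|: G)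
    (D := mem [set set0; [set ord0]; [set v1 m]]) (D2 := fun _ => mem (deletion K (v1 m)))
    (x := [set a]) (x2 := [set h]).
  apply.
    by move: aI; rewrite !inE => /orP[]/eqP ->; rewrite eqxx ?orbT.
  move: hI; rewrite !inE => /negbT; rewrite negb_or => /andP[h0 h1].
  by rewrite K1 // eq_sym.

Qed.
Lemma wed_single i : [set i] \in wed1 K.
Proof.
case: hW => _ hcl; apply: (hcl _ _ (@wed_pair ord0 i _));
  by rewrite ?sub1set !inE ?eqxx ?orbT.
Qed.

Lemma wed_add0 F : F \in wed1 K -> ord0 \notin F -> v1 m \notin F ->
  ord0 |: F \in wed1 K.
Proof.
rewrite /wed1 inE => /orP[] /imset2P [A B hA hB ->] n0 n1.
  rewrite inE setUA; apply/orP; left.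
  apply: imset2_f => //.
  move: hA; rewrite !powersetE => sA; apply/subsetP => i; rewrite !inE.
  by case/orP => [->//|/(subsetP sA)]; rewrite !inE.
rewrite inE; apply/orP; right.
move: hA; rewrite !inE => /orP[/orP[]|] /eqP eA.
- rewrite eA set0U; have := imset2_f (fun F G : {set 'I_m.+1} => F :|: G)
    (D := mem [set set0; [set ord0]; [set v1 m]]) (D2 := fun _ => mem (deletion K (v1 m)))
    (x := [set ord0]) (x2 := B).
  by apply => //; rewrite !inE eqxx ?orbT.
- rewrite eA setUA setUid; have := imset2_f (fun F G : {set 'I_m.+1} => F :|: G)
    (D := mem [set set0; [set ord0]; [set v1 m]]) (D2 := fun _ => mem (deletion K (v1 m)))
    (x := [set ord0]) (x2 := B).
  by apply => //; rewrite !inE eqxx ?orbT.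
by move: n1; rewrite eA !inE eqxx.
Qed.

End Wedge.


Unset Implicit Arguments. Set Strict Implicit. Set Printing Implicit Defensive.

Theorem proposition5p9 (R : realType) (m : nat) (K : {set {set 'I_m.+1}})
  (N d M0 M1 : nat) (x : 'I_m.+1 -> 'rV[R]_N) (Xhat : 'I_m.+1 -> 'rV[R]_d)
  (P0 : 'M[R]_(N, M0)) (P1 : 'M[R]_(N, M1)) :
  (0 < m)%N ->
  fan_like R K ->
  vertices K = [set i : 'I_m.+1 | i != ord0] ->
  complete_fan (wed1 K) x ->
  shephard x Xhat ->
  quotient_map (x ord0) P0 ->
  quotient_map (x (v1 m)) P1 ->
  let Sig := fan_of (wed1 K) x in
  let X0 := fun j : 'I_m => x (lift ord0 j) *m P0 in
  let X1 := fun j : 'I_m => x (lift (v1 m) j) *m P1 in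
  let Xhat0 := fun j : 'I_m => Xhat (lift ord0 j) in
  let Xhat1 := fun j : 'I_m => Xhat (lift (v1 m) j) in
  [/\ shephard X0 Xhat0,
      shephard X1 Xhat1
    & forall p : 'rV[R]_d,
        S_set Sig x Xhat p <->
        (S_set (proj_fan Sig (x ord0) P0) X0 Xhat0 p /\
         S_set (proj_fan Sig (x (v1 m)) P1) X1 Xhat1 p)].
Proof.
move=> hm hK hV hfan hsh hP0 hP1 Sig X0 X1 Xhat0 Xhat1.
have hW : is_complex (wed1 K) by case: hfan.
have h1 := wed_single hm hK hV hW.
have h2 : forall a h, a \in [set ord0; v1 m] -> [set a; h] \in wed1 K.
  by move=> a h; apply: (wed_pair hm hK hV hW).
have hv0 : forall h, [set ord0; h] \in wed1 K by move=> h; apply: h2; rewrite !inE eqxx.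
have hv1 : forall h, [set v1 m; h] \in wed1 K.
  by move=> h; apply: h2; rewrite !inE eqxx orbT.
have key : forall (M : nat) (v : 'I_m.+1) (P : 'M[R]_(N, M)) (Y : {set 'I_m.+1}) p,
    quotient_map (x v) P -> (forall h, [set v; h] \in wed1 K) ->
    ~: Y \in wed1 K -> v \notin Y ->
    S_set (proj_fan Sig (x v) P) (fun j => x (lift v j) *m P)
      (fun j => Xhat (lift v j)) p ->
    relint (conv Xhat Y) p.
  move=> M v P Y p hP hv hY vY hS.
  set Y' := [set j | lift v j \in Y].
  have eY : lift v @: Y' = Y.
    apply/setP => i; apply/imsetP/idP => [[j] | iY].
      by rewrite inE => jY ->.
    case: (unliftP v i) iY => [j|] -> iY; last by rewrite iY in vY.
    by exists j => //; rewrite inE.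
  have hc : coface (proj_fan Sig (x v) P) (fun j => x (lift v j) *m P) Y'.
    by apply/(proj_coface_iff hfan h1 hP hv); rewrite eY.
  have e := fun q => conv_lift Xhat v Y' q.
  rewrite eY in e.
  apply: relint_ext (hS _ hc) => q; split; [exact: (proj2 (e q)) | exact: (proj1 (e q))].
split.
- exact: (shephard_proj hP0 (xnz hfan h1 ord0) hsh).
- exact: (shephard_proj hP1 (xnz hfan h1 (v1 m)) hsh).
move=> p; split.
  move=> hS; split => Y' hc.
    have := proj1 (proj_coface_iff hfan h1 hP0 hv0 Y') hc.
    move/(coface_iff hfan h1)/hS => hr.
    apply: relint_ext hr => q; exact: conv_lift.
  have := proj1 (proj_coface_iff hfan h1 hP1 hv1 Y') hc.
  move/(coface_iff hfan h1)/hS => hr.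
  apply: relint_ext hr => q; exact: conv_lift.
case=> hS0 hS1 Y /(coface_iff hfan h1) hY.
case: (boolP (ord0 \in ~: Y)) => [i0|n0].
  by apply: (key _ _ _ _ _ hP0 hv0 hY) => //; move: i0; rewrite inE.
case: (boolP (v1 m \in ~: Y)) => [i1|n1].
  by apply: (key _ _ _ _ _ hP1 hv1 hY) => //; move: i1; rewrite inE.
have F0L := wed_add0 hY n0 n1.
apply: (relint_extend (x := x) (Y0 := ~: (ord0 |: ~: Y)) hsh).
- by rewrite setCK; apply: (fan_indep hfan).
- by rewrite setCU setCK subsetIr.
apply: (key _ _ _ _ _ hP0 hv0) => //.
- by rewrite setCK.
by rewrite !inE eqxx.
Qed.
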